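(* Let $G$ be a countable discrete group. Every $K_\sigma$ subgroup of $G^\omega$ is compactly generated if and only if every subgroup of $G$ is finitely generated.
   Context: $G^\omega$ carries the product topology. A subgroup $H$ of a topological group is compactly generated if $H=\langle K\rangle$ for some compact set $K$; it is $K_\sigma$ if it is a countable union of compact sets. *)

(* Defs.v *)
From HB Require Import structures.
From mathcomp Require Import all_boot.
From mathcomp Require Import monoid.
From mathcomp Require Import all_classical.
From mathcomp Require Import topology_structure compact discrete_topology function_spaces.

Set Implicit Arguments.
Unset Strict Implicit.
Unset Printing Implicit Defensive.

Local Open Scope classical_set_scope.
Local Open Scope group_scope.

Definition is_subgroup (T : groupType) (H : set T) : Prop :=
  H 1 /\ (forall x y, H x -> H y -> H (x * y)) /\ (forall x, H x -> H x^-1).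

Definition generated (T : groupType) (A : set T) : set T :=
  [set x | forall H : set T, is_subgroup H -> A `<=` H -> H x].

Definition finitely_generated (T : groupType) (H : set T) : Prop :=
  exists A : set T, finite_set A /\ H = generated A.

Definition Gomega (G : groupType) : Type :=
  prod_topology (fun _ : nat => discrete_topology G).

Section GomegaGroup.
Variable G : groupType.

HB.instance Definition _ :=
  Topological.copy (Gomega G) (prod_topology (fun _ : nat => discrete_topology G)).

Let one_w : Gomega G := fun _ => 1.
Let inv_w (f : Gomega G) : Gomega G := fun n => (f n)^-1.
Let mul_w (f g : Gomega G) : Gomega G := fun n => f n * g n.

Let mul_wA : associative mul_w.
Proof. by move=> f g h; apply: funext => n; rewrite /mul_w mulgA. Qed.
Let mul_1w : left_id one_w mul_w.
Proof. by move=> f; apply: funext => n; rewrite /mul_w mul1g. Qed.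
Let mul_w1 : right_id one_w mul_w.
Proof. by move=> f; apply: funext => n; rewrite /mul_w mulg1. Qed.
Let mul_Vw : left_inverse one_w inv_w mul_w.
Proof. by move=> f; apply: funext => n; rewrite /mul_w /inv_w mulVg. Qed.
Let mul_wV : right_inverse one_w inv_w mul_w.
Proof. by move=> f; apply: funext => n; rewrite /mul_w /inv_w mulgV. Qed.

HB.instance Definition _ :=
  isGroup.Build (Gomega G) mul_wA mul_1w mul_w1 mul_Vw mul_wV.

End GomegaGroup.

Definition compactly_generated (G : groupType) (H : set (Gomega G)) : Prop :=
  exists K : set (Gomega G), compact K /\ H = generated K.

Definition K_sigma (G : groupType) (H : set (Gomega G)) : Prop :=
  exists K : nat -> set (Gomega G),
    (forall n, compact (K n)) /\ H = \bigcup_n K n.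

(* Main.v *)
Require Import Defs.
From HB Require Import structures.
From mathcomp Require Import all_boot.
From mathcomp Require Import monoid.
From mathcomp Require Import all_classical.
From mathcomp Require Import topology_structure compact discrete_topology function_spaces supremum_topology initial_topology subspace_topology.
Local Open Scope classical_set_scope.
Local Open Scope group_scope.
Section S.
Context {G : groupType}.
Local Notation X := (Gomega G).
Lemma nbhs_coord (x : X) i : nbhs x [set y : X | y i = x i].
Proof.
have := @proj_continuous nat (fun _ => discrete_topology G) i x.
move=> /(_ [set x i]) h. apply: h. exact: discrete_set1.
Qed.

Definition S n (x : X) := [set y : X | forall i, (i < n)%N -> y i = x i].

Lemma nbhs_S n x : nbhs x (S n x).
Proof.
elim: n => [|n IH].
  by apply: filterS (filterT); move=> y _ i.
apply: filterS (filterI IH (nbhs_coord x n)).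
move=> y [h1 h2] i; rewrite ltnS leq_eqVlt => /orP[/eqP->//|]; exact: h1.
Qed.

Lemma local_cont (f : X -> X) :
  (forall x i, exists n, forall y, S n x y -> f y i = f x i) -> continuous f.
Proof.
move=> hf x.
have FF : Filter (f @ x).
  apply: fmap_filter. apply: nbhs_filter.
have := @cvg_sup _ nat (fun i => Topological.class (initial_topology (fun f : (nat -> discrete_topology G) => f i))) (f @ x) (f x) FF.
move=> [_ h]; apply: h => i U [V] [[W] oW <-] WfN WU.
have [n hn] := hf x i.
have sub : S n x `<=` f @^-1` U.
  move=> y /hn hy; apply: WU; rewrite /= hy; exact: WfN.
have := filterS sub (nbhs_S n x). exact.
Qed.

Definition N n := [set y : X | forall i, (i < n)%N -> y i = 1].

Lemma N_nbhs1 (V : set X) : nbhs (1 : X) V -> exists n, N n `<=` V.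
Proof.
move=> nV; apply: contrapT => hne.
have hx : forall n, exists y, N n y /\ ~ V y.
  move=> n; apply: contrapT => h; apply: hne; exists n => y Ny.
  apply: contrapT => nVy; apply: h; by exists y.
have [x hx'] := choice hx.
have FF : Filter (x @ \oo) by apply: fmap_filter.
have cv : x @ \oo --> (1 : X).
  have := @cvg_sup _ nat (fun i => Topological.class (initial_topology (fun f : (nat -> discrete_topology G) => f i))) (x @ \oo) (1 : X) FF.
  move=> [_ h]; apply: h => i U [V'] [[W] oW <-] W1 WU.
  exists i.+1 => // n /= hn; apply: WU; rewrite /= (hx' n).1 //.
have := cv V nV. move=> [M _ hM]. have := (hx' M).2; apply; by apply: hM => /=.
Qed.

Lemma N_closed n : closed (N n).
Proof.
move=> y cy i hi.
have [z [Nz zi]] := cy _ (nbhs_coord y i).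
by rewrite -zi; apply: Nz.
Qed.

Lemma compact_union (C : nat -> set X) :
  (forall n, compact (C n)) -> (forall n, C n `<=` N n) ->
  compact ([set (1 : X)] `|` \bigcup_n C n).
Proof.
move=> cC CN; set U := _ `|` _.
pose D n := [set x | exists2 k, (k < n)%N & C k x].
have cD : forall n, compact (D n).
  elim=> [|n IH].
    have -> : D 0 = set0 by apply/seteqP; split => x // [].
    exact: compact0.
  have -> : D n.+1 = D n `|` C n.
    apply/seteqP; split => x.
      case=> k; rewrite ltnS leq_eqVlt => /orP[/eqP->|hk] hx; [by right| left; exists k => //].
    by case=> [[k hk hx]|hx]; [exists k => //; exact: ltnW | exists n].
  exact: compactU.
have DU : forall n, U `&` ~` N n `<=` D n.
  move=> n x [[->|[k _ hk]] hN].
    by exfalso; apply: hN => i _.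
  have [kn|nk] := ltnP k n; first by exists k.
  exfalso; apply: hN => i hi; apply: (CN k x hk); exact: leq_trans hi nk.
have DsU : forall n, D n `<=` U by move=> n x [k _ hk]; right; exists k.
move=> F PF FU.
have [[n Fn]|hno] := pselect (exists n, F (U `&` ~` N n)).
  have [p [Dp cp]] := cD n F PF (filterS (DU n) Fn).
  by exists p; split => //; apply: DsU Dp.
exists 1; split; first by left.
move=> A B FA nB.
have [n NB] := @N_nbhs1 B nB.
apply: contrapT => hAB; apply: hno; exists n.
apply: filterS (filterI FU FA) => x [Ux Ax]; split => // Nx.
apply: hAB; exists x; split => //; exact: NB.
Qed.

End S.

Lemma compact_discrete_finite (T : choiceType) (A : set (discrete_topology T)) :
  compact A -> finite_set A.
Proof.
move=> cA; apply: contrapT => infA.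
pose F : set_system (discrete_topology T) := [set B | finite_set (A `\` B)].
have FF : Filter F.
  constructor.
  - by rewrite /F /= setDT; exact: finite_set0.
  - move=> B C; rewrite /F /= => fB fC; by rewrite setDIr finite_setU.
  - move=> B C BC; rewrite /F => fB; apply: sub_finite_set fB => x [Ax nCx]; split => // Bx; apply: nCx; exact: BC.
have PF : ProperFilter F.
  apply: Build_ProperFilter_ex => B fB; apply: contrapT => nB; apply: infA.
  apply: sub_finite_set fB => x Ax; split => // Bx; apply: nB; by exists x.
have [|p [Ap cl]] := cA F PF.
  by rewrite /F /= setDv; exact: finite_set0.
have [|z [nz zp]] := cl (~` [set p]) [set p] _ (discrete_set1 p).
  rewrite /F; apply: sub_finite_set (finite_set1 p) => x [_ hx].
  by apply: contrapT.
by apply: nz.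
Qed.


Lemma compact_bigcup_fin (T : topologicalType) (I : choiceType) (D : set I) (C : I -> set T) :
  finite_set D -> (forall i, compact (C i)) -> compact (\bigcup_(i in D) C i).
Proof. move=> /finite_seqP [r ->] cC; rewrite bigcup_seq; exact: bigsetU_compact. Qed.

Section Gen.
Context {T : groupType}.
Lemma gen_subgroup (A : set T) : is_subgroup (generated A).
Proof.
split; [|split].
- by move=> H [H1 _].
- by move=> x y hx hy H sH AH; case: (sH) => _ [hM _]; apply: hM; [apply: hx|apply: hy].
- by move=> x hx H sH AH; case: (sH) => _ [_ hV]; apply: hV; apply: hx.
Qed.
Lemma gen_incl (A : set T) : A `<=` generated A.
Proof. by move=> x Ax H _; apply. Qed.
Lemma gen_min (A H : set T) : is_subgroup H -> A `<=` H -> generated A `<=` H.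
Proof. by move=> sH AH x; apply. Qed.
Lemma gen_mono (A B : set T) : A `<=` B -> generated A `<=` generated B.
Proof.
move=> AB; apply: gen_min; first exact: gen_subgroup.
by move=> x /AB; apply: gen_incl.
Qed.
End Gen.
Arguments gen_min {T A H}.
Arguments gen_mono {T A B}.
Arguments gen_incl {T A}.

Section S2.
Context {G : groupType}.
Local Notation X := (Gomega G).

Definition pre n (x : X) : discrete_topology (seq G) := [seq x i | i <- iota 0 n].

Lemma pre_cont n : continuous (pre n).
Proof.
move=> x.
have FF : Filter (pre n @ x) by apply: fmap_filter; apply: nbhs_filter.
apply/(@discrete_cvg _ _ (pre n x) FF).
have sub : S n x `<=` pre n @^-1` [set pre n x].
  move=> y hy; rewrite /= /pre; apply/eq_in_map => i; rewrite mem_iota add0n => /andP[_ hi].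
  exact: hy.
have := filterS sub (nbhs_S n x). exact.
Qed.

Lemma pre_eq n (x y : X) : pre n x = pre n y -> forall i, (i < n)%N -> x i = y i.
Proof.
move=> e i hi; move/(congr1 (fun s => nth (1 : G) s i)): e.
by rewrite /pre !(nth_map 0) ?size_iota // nth_iota.
Qed.

Lemma pre_finite n (K : set X) : compact K -> finite_set (pre n @` K).
Proof.
move=> cK; apply: compact_discrete_finite.
apply: continuous_compact => //; apply: continuous_subspaceT; exact: pre_cont.
Qed.

Lemma lmul_cont (w : X) : continuous (fun y : X => w * y).
Proof.
apply: local_cont => x i; exists i.+1 => y hy.
by change (w i * y i = w i * x i); rewrite (hy i (ltnSn i)).
Qed.

Lemma lmul_compact (w : X) (K : set X) : compact K -> compact ((fun y : X => w * y) @` K).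
Proof. move=> cK; apply: continuous_compact => //; apply: continuous_subspaceT; exact: lmul_cont. Qed.

End S2.

Section Back.
Context {G : groupType}.
Local Notation X := (Gomega G).

Lemma mulE' (x y : X) i : (x * y) i = x i * y i. Proof. by []. Qed.
Lemma invE' (x : X) i : (x^-1) i = (x i)^-1. Proof. by []. Qed.
Lemma oneE' i : (1 : X) i = 1. Proof. by []. Qed.

Lemma backward (noeth : forall H : set G, is_subgroup H -> finitely_generated H)
  (L : set X) (sL : is_subgroup L) (K : nat -> set X)
  (cK : forall n, compact (K n)) (hL : L = \bigcup_n K n) : compactly_generated L.
Proof.
have [L1 [LM LV]] := sL.
pose Q k := [set g : G | exists x, L x /\ N k x /\ x k = g].
have /choice [Ag hA] : forall k, exists A : set G, finite_set A /\ Q k = generated A.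
  move=> k; apply: noeth; split; [|split].
  - by exists 1; split => //; split => // i _.
  - move=> a b [x [Lx [Nx <-]]] [y [Ly [Ny <-]]]; exists (x * y); split; first exact: LM.
    by split => // i hi; rewrite mulE' Nx // Ny // mulg1.
  - move=> a [x [Lx [Nx <-]]]; exists x^-1; split; first exact: LV.
    by split => // i hi; rewrite invE' Nx // invg1.
have /choice [f hf] : forall ka : nat * G, exists x : X,
    Ag ka.1 ka.2 -> L x /\ N ka.1 x /\ x ka.1 = ka.2.
  move=> [k a] /=.
  have [Aa|nAa] := pselect (Ag k a); last by exists 1.
  have : Q k a by rewrite (hA k).2; exact: gen_incl.
  by move=> [x hx]; exists x.
pose T k := (fun a => f (k, a)) @` Ag k.
pose Tall := \bigcup_k T k.
have TL : Tall `<=` L by move=> _ [k _ [a Aa <-]]; have [] := hf (k, a) Aa.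
have TN : forall k, T k `<=` N k by move=> k _ [a Aa <-]; have [_ []] := hf (k, a) Aa.
have Tfin : forall k, finite_set (T k) by move=> k; apply: finite_image; exact: (hA k).1.
pose Gen := generated Tall.
have sGen : is_subgroup Gen := gen_subgroup Tall.
have [G1 [GM GV]] := sGen.
have GenL : Gen `<=` L := gen_min sL TL.
have liftQ : forall k g, Q k g -> exists u, Gen u /\ N k u /\ u k = g.
  move=> k g; rewrite (hA k).2; apply: (@gen_min _ (Ag k) [set g | exists u, Gen u /\ N k u /\ u k = g]).
    split; [|split].
    - by exists 1; split => //; split => // i _.
    - move=> a b [x [Gx [Nx <-]]] [y [Gy [Ny <-]]]; exists (x * y); split; first exact: GM.
      by split => // i hi; rewrite mulE' Nx // Ny // mulg1.
    - move=> a [x [Gx [Nx <-]]]; exists x^-1; split; first exact: GV.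
      by split => // i hi; rewrite invE' Nx // invg1.
  move=> a Aa; exists (f (k, a)); have [_ [Nk fk]] := hf (k, a) Aa.
  split; last by split.
  by apply: gen_incl; exists k => //; exists a.
have approx : forall n x, L x -> exists w, Gen w /\ N n (w^-1 * x).
  move=> n x Lx; elim: n => [|n [w [Gw Nw]]].
    by exists 1; split => // i.
  have Ly : L (w^-1 * x) by apply: LM => //; apply: LV; exact: GenL.
  have Qy : Q n ((w^-1 * x) n) by exists (w^-1 * x).
  have [u [Gu [Nu un]]] := liftQ n _ Qy.
  exists (w * u); split; first exact: GM.
  move=> i; rewrite ltnS leq_eqVlt => /orP[/eqP->|hi].
    by rewrite invgM -mulgA mulE' invE' un mulVg.
  by rewrite invgM -mulgA mulE' (Nw i hi) invE' (Nu i hi) invg1 mulg1.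
have /choice [wch hw] : forall ns : nat * seq G, exists w : X,
    Gen w /\ forall x, K ns.1 x -> pre ns.1 x = ns.2 -> N ns.1 (w^-1 * x).
  move=> [n s] /=.
  have [[x0 [Kx0 e0]]|nx] := pselect (exists x, K n x /\ pre n x = s); last first.
    by exists 1; split => // x Kx ex; exfalso; apply: nx; exists x.
  have Lx0 : L x0 by rewrite hL; exists n.
  have [w [Gw Nw]] := approx n x0 Lx0.
  exists w; split => // x Kx ex i hi.
  rewrite mulE' (@pre_eq _ n x x0 (etrans ex (esym e0)) i hi); exact: (Nw i hi).
pose B n := \bigcup_(s in pre n @` K n)
   (((fun y : X => (wch (n, s))^-1 * y) @` K n) `&` N n).
have cB : forall n, compact (B n).
  move=> n; apply: compact_bigcup_fin; first exact: pre_finite.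
  move=> s; apply: compact_closedI; [exact: lmul_compact | exact: N_closed].
have BN : forall n, B n `<=` N n by move=> n y [s _ [_ ?]].
have BL : forall n, B n `<=` L.
  move=> n _ [s _ [[x Kx <-] _]]; apply: LM.
    by apply: LV; apply: GenL; have [] := hw (n, s).
  by rewrite hL; exists n.
pose Ks := [set (1 : X)] `|` \bigcup_n (T n `|` B n).
exists Ks; split.
  apply: compact_union.
    by move=> n; apply: compactU; [exact: finite_compact | exact: cB].
  by move=> n y [/TN|/BN].
apply/seteqP; split.
  move=> x Lx.
  have [n _ Kx] : (\bigcup_n K n) x by rewrite -hL.
  have [Gw Nw] := hw (n, pre n x).
  have By : B n ((wch (n, pre n x))^-1 * x).
    by exists (pre n x); [exists x | split; [exists x | exact: Nw]].
  have -> : x = wch (n, pre n x) * ((wch (n, pre n x))^-1 * x) by rewrite mulgA mulgV mul1g.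
  have [_ [KM _]] := gen_subgroup Ks.
  apply: KM.
    have TK : Tall `<=` Ks by move=> z [k _ Tk]; right; exists k => //; left.
    apply: (gen_mono TK); exact: Gw.
  by apply: gen_incl; right; exists n => //; right.
apply: gen_min => //.
move=> y [->//|[n _ [Ty|By]]]; last exact: BL By.
by apply: TL; exists n.
Qed.
End Back.

Lemma forward (G : groupType) (hG : countable [set: G])
  (hyp : forall H : set (Gomega G), is_subgroup H -> K_sigma H -> compactly_generated H)
  (H : set G) (sH : is_subgroup H) : finitely_generated H.
Proof.
have [H1 [HM HV]] := sH.
pose c (h : G) : Gomega G := fun _ => h.
pose D := c @` H.
have sD : is_subgroup D.
  split; [|split].
  - by exists 1.
  - move=> _ _ [a Ha <-] [b Hb <-]; exists (a * b); first exact: HM.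
    by apply: funext.
  - move=> _ [a Ha <-]; exists a^-1; first exact: HV.
    by apply: funext.
have /countable_injP [g ginj] := hG.
have KD : K_sigma D.
  exists (fun n => [set x | exists2 h, H h /\ g h = n & c h = x]); split.
    move=> n; apply: finite_compact.
    have [[h0 [Hh0 e0]]|nh] := pselect (exists h, H h /\ g h = n).
      apply: sub_finite_set (finite_set1 (c h0)) => z [h [Hh eh] <-].
      have -> // : h = h0 by apply: ginj; rewrite ?inE // eh e0.
    apply: sub_finite_set (finite_set0 _) => z [h [Hh eh] _]; apply: nh; by exists h.
  apply/seteqP; split.
    by move=> _ [h Hh <-]; exists (g h) => //; exists h.
  by move=> _ [n _ [h [Hh _] <-]]; exists h.
have [Kc [cKc eKc]] := hyp D sD KD.
pose A := (fun x : Gomega G => (x 0 : discrete_topology G)) @` Kc.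
have Afin : finite_set A.
  apply: compact_discrete_finite; apply: continuous_compact => //.
  apply: continuous_subspaceT. exact: (@proj_continuous nat (fun _ => discrete_topology G) 0).
exists A; split => //.
apply/seteqP; split.
  move=> h Hh.
  have : generated Kc (c h) by rewrite -eKc; exists h.
  apply: (@gen_min _ Kc [set x : Gomega G | generated A (x 0)]).
    have [A1 [AM AV]] := gen_subgroup A.
    split; [|split].
    - exact: A1.
    - move=> x y hx hy; exact: AM.
    - move=> x hx; exact: AV.
  by move=> x Kx; apply: gen_incl; exists x.
apply: gen_min => // _ [x Kx <-].
have : D x by rewrite eKc; apply: gen_incl.
by move=> [h Hh <-].
Qed.

Theorem mainTheorem4 (G : groupType) (hG : countable [set: G]) :
  (forall H : set (Gomega G), is_subgroup H -> K_sigma H -> compactly_generated H)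
  <-> (forall H : set G, is_subgroup H -> finitely_generated H).
Proof.
split.
  by move=> hyp H sH; exact: forward.
by move=> noeth H sH [K [cK hL]]; exact: backward.
Qed.
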